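(* Let $X$ be a smooth, pointed, oriented, closed, connected manifold, $\Xi$ a set of DG Morse data on $X$ with Morse function $f$ and twisting cocycle $\{m_{x,y}\}$, and let $\boldsymbol{\varphi}=\{\varphi_n\}_{n\ge1}:(\mathcal{A},\nu^{\mathcal{A}})\to(\mathcal{B},\nu^{\mathcal{B}})$ be a morphism of $\mathcal{A}_\infty$-modules over $C_*(\Omega X)$. Then the map $\tilde\varphi:C_*(X,\Xi,\mathcal{A})\to C_*(X,\Xi,\mathcal{B})$ defined by $$\tilde\varphi=\sum_{n\ge0}(\varphi_{n+1}\otimes1)\tilde{\mathbf m}^n$$ is a morphism of complexes.
   Context: $C_*(\Omega X)$ (normalized cubical chains on Moore based loops) is viewed as an $\mathcal{A}_\infty$-algebra with $\mu_1$ the differential, $\mu_2$ the Pontryagin product and $\mu_i=0$ for $i\ge3$. All functional expressions obey the Koszul sign rule $(f\otimes g)(x\otimes y)=(-1)^{|g||x|}f(x)\otimes g(y)$. An $\mathcal{A}_\infty$-module over $C_*(\Omega X)$ is a graded $\mathbb{Z}$-module $\mathcal{A}$ with maps $\nu_n:\mathcal{A}\otimes C_*(\Omega X)^{\otimes n-1}\to\mathcal{A}$ of degree $n-2$ ($\nu_1$ the differential) such that for all $N\ge1$: $\sum_{s+t=N,s\ge1}(-1)^{st}\nu_{t+1}(\nu_s\otimes1^{\otimes t})+\sum_{r+s+t=N,\,r,s\ge1}(-1)^{r+st}\nu_{r+t+1}(1^{\otimes r}\otimes\mu_s\otimes1^{\otimes t})=0$. A morphism $\boldsymbol\varphi:(\mathcal{A},\nu^A)\to(\mathcal{B},\nu^B)$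 is a family of maps $\varphi_n:\mathcal{A}\otimes C_*(\Omega X)^{\otimes n-1}\to\mathcal{B}$ of degree $n-1$ with, for all $N\ge1$, $\sum_{s+t=N}(-1)^{st}\varphi_{t+1}(\nu^A_s\otimes1^{\otimes t})+\sum_{r+s+t=N,r\ge1}(-1)^{r+st}\varphi_{r+t+1}(1^{\otimes r}\otimes\mu_s\otimes1^{\otimes t})=\sum_{s+t=N}(-1)^{(s+1)t}\nu^B_{t+1}(\varphi_s\otimes1^{\otimes t})$. Twisted complexes: given a twisting cocycle $m_{x,y}\in C_{|x|-|y|-1}(\Omega X)$ ($x,y\in\mathrm{Crit}(f)$, $\partial m_{x,y}=\sum_z(-1)^{|x|-|z|}m_{x,z}m_{z,y}$), set $\mathbf m(x)=\sum_y m_{x,y}\otimes y$ and extend to $\tilde{\mathbf m}$ of degree $-1$ on $\mathcal{A}\otimes TC_*(\Omega X)\otimes\mathbb{Z}\mathrm{Crit}(f)$ by $\tilde{\mathbf m}(\alpha\otimes\gamma_1\otimes\dots\otimes\gamma_k\otimes x)=(1^{\otimes k+1}\otimes\mathbf m)(\alpha\otimes\gamma_1\otimes\dots\otimes\gamma_k\otimes x)$. The complex $C_*(X,\Xi,\mathcal{A})=\mathcal{A}\otimes\mathbb{Z}\mathrm{Crit}(f)$ has differential $\partial=\sum_{n\ge0}(\nu_{n+1}\otimes1)\tilde{\mathbf m}^n$, where $m_{x,y}$ is the Barraud–Cornea twisting cocycle of the DG Morse data $\Xi$ (Morse–Smale pair, orientations, representing chain system of moduli spaces of broken trajectories, tree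 rooted at the basepoint with vertices the critical points, homotopy inverse of the tree collapse). *)

(* Defs.v *)
From HB Require Import structures.
From mathcomp Require Import all_boot all_order all_algebra.
Set Implicit Arguments. Unset Strict Implicit. Unset Printing Implicit Defensive.
Import Order.TTheory GRing.Theory Num.Theory.
Local Open Scope ring_scope.

Definition koz (z : int) : int := (-1) ^+ `|z|%N.

(* A grading of a Z-module V: Vd k is the (sub)group of homogeneous elements
   of degree k. *)
Definition graded_sub (V : zmodType) (Vd : int -> {pred V}) : Prop :=
  forall k, 0 \in Vd k /\ (forall u v, u \in Vd k -> v \in Vd k -> u - v \in Vd k).

Section AInfinity.
Variable C : nzRingType.          (* the chain algebra C_*(Omega X) *)
Variable Cd : int -> {pred C}.
Variable d : C -> C.

(* C is a nonnegatively graded DG algebra: mu_1 = d, mu_2 = product, mu_i = 0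
   for i >= 3 (the A_oo relations for such data are exactly these axioms). *)
Definition is_DGA : Prop :=
  graded_sub Cd /\
  [/\ (forall q g, q < 0 -> g \in Cd q -> g = 0),
      (forall p q g h, g \in Cd p -> h \in Cd q -> g * h \in Cd (p + q)),
      1 \in Cd 0,
      (forall g h, d (g + h) = d g + d h) &
  [/\ (forall q g, g \in Cd q -> d g \in Cd (q - 1)),
      (forall g, d (d g) = 0) &
      (forall p g h, g \in Cd p -> d (g * h) = d g * h + (g * d h) *~ koz p)]].

(* homogeneous inputs are carried together with their degrees *)
Definition homs (gs : seq (C * int)) : bool := all (fun gq => gq.1 \in Cd gq.2) gs.
Definition degs (gs : seq (C * int)) : int := \sum_(gq <- gs) gq.2.
Definition els (gs : seq (C * int)) : seq C := map fst gs.

Definition mu (gs : seq C) : C :=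
  match gs with [:: g] => d g | [:: g; h] => g * h | _ => 0 end.

(* Value on a(deg p) (x) gs of
     sum_{r+s+t=N, r,s>=1} (-1)^{r+st} f_{r+t+1} (1^{(x)r} (x) mu_s (x) 1^{(x)t}),
   N = size gs + 1, with the Koszul sign (-1)^{|mu_s| * (p + deg of the first r-1 gs)}. *)
Definition mu_terms (V W : zmodType) (f : V -> seq C -> W) (p : int) (a : V)
    (gs : seq (C * int)) : W :=
  let N := (size gs).+1 in
  \sum_(1 <= r < N) \sum_(1 <= s < (N - r).+1)
    let t := (N - r - s)%N in
    let pre := take r.-1 gs in
    let mid := take s (drop r.-1 gs) in
    let post := drop (r.-1 + s) gs in
    f a (els pre ++ mu (els mid) :: els post)
      *~ (koz (r%:Z + (s * t)%:Z) * koz ((s%:Z - 2) * (p + degs pre))).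

(* multilinearity of a map V (x) C^{(x) n-1} -> W, written f a [:: c_1; ..; c_{n-1}] *)
Definition multilinear (V W : zmodType) (f : V -> seq C -> W) : Prop :=
  (forall a b gs, f (a + b) gs = f a gs + f b gs) /\
  (forall a pre post g h,
     f a (pre ++ (g + h) :: post) = f a (pre ++ g :: post) + f a (pre ++ h :: post)).

(* A_oo-module: nu a [:: c_1; ..; c_{n-1}] stands for nu_n (a (x) c_1 (x) .. (x) c_{n-1}) *)
Definition Ainf_module (A : zmodType) (Ad : int -> {pred A}) (nu : A -> seq C -> A) : Prop :=
  [/\ graded_sub Ad, multilinear nu,
      (forall p a gs, a \in Ad p -> homs gs ->
         nu a (els gs) \in Ad (p + degs gs + (size gs)%:Z - 1)) &
      (forall p a gs, a \in Ad p -> homs gs ->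
         let N := (size gs).+1 in
         \sum_(1 <= s < N.+1) nu (nu a (take s.-1 (els gs))) (drop s.-1 (els gs))
             *~ koz (s * (N - s))%:Z
         + mu_terms nu p a gs = 0)].

(* A_oo-morphism: phi a [:: c_1; ..; c_{n-1}] stands for phi_n (a (x) c_1 (x) ..) *)
Definition Ainf_morphism (A : zmodType) (Ad : int -> {pred A}) (nuA : A -> seq C -> A)
    (B : zmodType) (Bd : int -> {pred B}) (nuB : B -> seq C -> B)
    (phi : A -> seq C -> B) : Prop :=
  [/\ multilinear phi,
      (forall p a gs, a \in Ad p -> homs gs ->
         phi a (els gs) \in Bd (p + degs gs + (size gs)%:Z)) &
      (forall p a gs, a \in Ad p -> homs gs ->
         let N := (size gs).+1 in
         \sum_(1 <= s < N.+1) phi (nuA a (take s.-1 (els gs))) (drop s.-1 (els gs))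
             *~ koz (s * (N - s))%:Z
         + mu_terms phi p a gs
         = \sum_(1 <= s < N.+1) nuB (phi a (take s.-1 (els gs))) (drop s.-1 (els gs))
             *~ koz (s.+1 * (N - s))%:Z)].

Variable Crit : finType.
Variable ind : Crit -> nat.
Variable m : Crit -> Crit -> C.

Definition twisting_cocycle : Prop :=
  (forall x y, m x y \in Cd ((ind x)%:Z - (ind y)%:Z - 1)) /\
  (forall x y, d (m x y) = \sum_(z : Crit) (m x z * m z y) *~ koz ((ind x)%:Z - (ind z)%:Z)).

(* elementary tensor a (x) g_1 (x) .. (x) g_k (x) x in V (x) T C (x) Z Crit,
   with the degrees of a and of the g_i recorded *)
Record word (V : Type) := Word { wa : V; wdeg : int; wgs : seq (C * int); wx : Crit }.

(* m~ (a (x) gs (x) x) = (1^{(x) k+1} (x) m)(a (x) gs (x) x)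
   = sum_y (-1)^{|m| (|a| + |gs|)} a (x) gs (x) m_{x,y} (x) y,  with |m| = -1 *)
Definition mtilde (V : Type) (w : word V) : seq (int * word V) :=
  [seq (koz (- (wdeg w + degs (wgs w))),
        Word (wa w) (wdeg w)
             (rcons (wgs w) (m (wx w) y, (ind (wx w))%:Z - (ind y)%:Z - 1)) y)
  | y <- enum Crit].

(* linear extension of m~ to formal Z-combinations of elementary tensors *)
Definition mtilde_lin (V : Type) (ws : seq (int * word V)) : seq (int * word V) :=
  flatten [seq [seq (cw.1 * cw'.1, cw'.2) | cw' <- mtilde cw.2] | cw <- ws].

(* (f (x) 1) applied to a formal combination; the result lives in W (x) Z Crit,
   represented as {ffun Crit -> W} *)
Definition apply_f1 (V W : zmodType) (f : V -> seq C -> W) (ws : seq (int * word V))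
    : {ffun Crit -> W} :=
  \sum_(cw <- ws)
    [ffun y => if y == wx cw.2 then f (wa cw.2) (els (wgs cw.2)) *~ cw.1 else 0].

(* sum_{n >= 0} (f_{n+1} (x) 1) m~^n, on a homogeneous element of total degree k of
   V (x) Z Crit = sum_x c_x (x) x  (c_x of degree k - |x|).  The terms with
   n >= #|Crit| vanish (m_{x,y} = 0 unless |x| > |y|), so the sum is truncated. *)
Definition twisted_op (V W : zmodType) (f : V -> seq C -> W) (k : int)
    (c : {ffun Crit -> V}) : {ffun Crit -> W} :=
  \sum_(x : Crit) \sum_(n < #|Crit|.+1)
     apply_f1 f (iter n (@mtilde_lin V) [:: (1, Word (c x) (k - (ind x)%:Z) [::] x)]).

End AInfinity.

(* Main.v *)
Require Import Defs.
From HB Require Import structures.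
From mathcomp Require Import all_boot all_order all_algebra zify ring.
Import Order.TTheory GRing.Theory Num.Theory.
Local Open Scope ring_scope.
Set Implicit Arguments. Unset Strict Implicit. Unset Printing Implicit Defensive.

Lemma kozS (z : int) : koz (z + 1) = - koz z.
Proof.
rewrite /koz; case: z => n.
  by rewrite -PoszD addn1 exprS mulN1r.
case: n => [|n] /=; first by rewrite expr1 opprK.
by rewrite subn1 /= [in RHS]exprS mulN1r opprK.
Qed.

Lemma koz0 : koz 0 = 1. Proof. by []. Qed.
Lemma koz1 : koz 1 = -1. Proof. by rewrite /koz expr1. Qed.

Lemma kozN (z : int) : koz (- z) = koz z.
Proof. by rewrite /koz abszN. Qed.

Lemma kozD (a b : int) : koz (a + b) = koz a * koz b.
Proof.
elim/int_rec: b => [|n IH|n IH]; first by rewrite addr0 koz0 mulr1.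
  by rewrite -addn1 PoszD addrA !kozS IH mulrN.
have e1 : a - n%:Z = (a - n.+1%:Z) + 1.
  by rewrite -addn1 PoszD opprD addrA subrK.
have e2 : - n%:Z = - (n.+1%:Z) + 1.
  by rewrite -addn1 PoszD opprD subrK.
have h1 : koz (a - n.+1%:Z) = - koz (a - n%:Z) by rewrite e1 kozS opprK.
have h2 : koz (- n.+1%:Z) = - koz (- n%:Z) by rewrite e2 kozS opprK.
by rewrite h1 h2 IH mulrN.
Qed.

Lemma kozB (a b : int) : koz (a - b) = koz a * koz b.
Proof. by rewrite kozD kozN. Qed.

Lemma kozK (z : int) : koz z * koz z = 1.
Proof. by rewrite /koz -exprD addnn -mul2n exprM sqrrN !expr1n. Qed.

Lemma koz_nat (n : nat) : koz n%:Z = (-1) ^+ n.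
Proof. by []. Qed.

Lemma koz_even (z q : int) : koz (z + q * 2) = koz z.
Proof.
rewrite kozD; suff -> : koz (q * 2) = 1 by rewrite mulr1.
by rewrite mulrDr mulr1 kozD kozK.
Qed.

Section Additive.
Variables (V W : zmodType) (f : V -> W).
Hypothesis fD : forall a b, f (a + b) = f a + f b.
Lemma af0 : f 0 = 0.
Proof. have h := fD 0 0; rewrite addr0 in h; by apply: (@addrI _ (f 0)); rewrite addr0 -h. Qed.
Lemma afN a : f (- a) = - f a.
Proof. by apply/eqP; rewrite -subr_eq0 opprK -fD addNr af0. Qed.
Lemma af_sum I (r : seq I) (P : pred I) (F : I -> V) :
  f (\sum_(i <- r | P i) F i) = \sum_(i <- r | P i) f (F i).
Proof. exact: (big_morph f fD af0). Qed.
Lemma afMn a n : f (a *+ n) = f a *+ n.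
Proof. elim: n => [|n IH]; first by rewrite !mulr0n af0. by rewrite !mulrS fD IH. Qed.
Lemma afMz a (z : int) : f (a *~ z) = f a *~ z.
Proof. case: z => n; first exact: afMn. by rewrite !NegzE !mulrNz afN afMn. Qed.
Lemma af_if (b : bool) a : f (if b then a else 0) = if b then f a else 0.
Proof. by case: b; rewrite ?af0. Qed.
End Additive.
Section Paths.
Variable C : nzRingType.
Variable Crit : finType.
Variable ind : Crit -> nat.
Variable m : Crit -> Crit -> C.

Fixpoint psum (V : zmodType) (n : nat) (F : seq Crit -> V) : V :=
  if n is n'.+1 then \sum_(y : Crit) psum n' (fun ys => F (y :: ys)) else F [::].

Fixpoint pgs (x : Crit) (ys : seq Crit) : seq (C * int) :=
  if ys is y :: ys' then (m x y, (ind x)%:Z - (ind y)%:Z - 1) :: pgs y ys' else [::].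

Fixpoint psign (k : int) (x : Crit) (ys : seq Crit) : int :=
  if ys is y :: ys' then koz (k - (ind x)%:Z) * psign (k - 1) y ys' else 1.

Lemma psum_ext (V : zmodType) n (F G : seq Crit -> V) :
  (forall ys, size ys = n -> F ys = G ys) -> psum n F = psum n G.
Proof.
elim: n F G => [|n IH] F G H /=; first exact: H.
apply: eq_bigr => y _; apply: IH => ys hs; apply: H; by rewrite /= hs.
Qed.

Lemma psum_sum (V : zmodType) n I (r : seq I) (P : pred I) (F : I -> seq Crit -> V) :
  psum n (fun ys => \sum_(i <- r | P i) F i ys) = \sum_(i <- r | P i) psum n (F i).
Proof.
elim: n F => [|n IH] F //=.
under eq_bigr do rewrite IH.
exact: exchange_big.
Qed.

Lemma psum_add (V : zmodType) n (F G : seq Crit -> V) :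
  psum n (fun ys => F ys + G ys) = psum n F + psum n G.
Proof.
elim: n F G => [|n IH] F G //=.
by rewrite -big_split; apply: eq_bigr => y _; rewrite IH.
Qed.

Lemma psum_morph (V W : zmodType) (f : V -> W) n (F : seq Crit -> V) :
  (forall a b, f (a + b) = f a + f b) -> f (psum n F) = psum n (fun ys => f (F ys)).
Proof.
move=> fD; elim: n F => [|n IH] F //=.
rewrite (af_sum fD); apply: eq_bigr => y _; exact: IH.
Qed.

Lemma psum0 (V : zmodType) n : psum n (fun _ => (0 : V)) = 0.
Proof. by elim: n => [|n IH] //=; rewrite big1. Qed.

Lemma psum_eq0 (V : zmodType) n (F : seq Crit -> V) :
  (forall ys, size ys = n -> F ys = 0) -> psum n F = 0.
Proof. by move=> H; rewrite (psum_ext (G := fun _ => 0)) ?psum0. Qed.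

Lemma psum_mulz (V : zmodType) n (F : seq Crit -> V) z :
  psum n (fun ys => F ys *~ z) = psum n F *~ z.
Proof. by rewrite (psum_morph (f := fun v : V => v *~ z)) // => a b; rewrite mulrzDl. Qed.

Lemma psum_ffun (V : zmodType) n (F : seq Crit -> {ffun Crit -> V}) z :
  psum n F z = psum n (fun ys => F ys z).
Proof.
by rewrite (psum_morph (f := fun g : {ffun Crit -> V} => g z)) // => a b; rewrite ffunE.
Qed.

Lemma psum_cat (V : zmodType) n1 n2 (F : seq Crit -> V) :
  psum (n1 + n2) F = psum n1 (fun ys1 => psum n2 (fun ys2 => F (ys1 ++ ys2))).
Proof.
elim: n1 F => [|n1 IH] F //=.
by apply: eq_bigr => y _; rewrite IH.
Qed.

Lemma size_pgs x ys : size (pgs x ys) = size ys.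
Proof. by elim: ys x => [|y ys IH] x //=; rewrite IH. Qed.

Lemma pgs_cat x ys1 ys2 : pgs x (ys1 ++ ys2) = pgs x ys1 ++ pgs (last x ys1) ys2.
Proof. by elim: ys1 x => [|y ys IH] x //=; rewrite IH. Qed.

Lemma psign_cat k x ys1 ys2 :
  psign k x (ys1 ++ ys2) = psign k x ys1 * psign (k - (size ys1)%:Z) (last x ys1) ys2.
Proof.
elim: ys1 k x => [|y ys IH] k x /=; first by rewrite subr0 mul1r.
rewrite IH mulrA; congr (_ * psign _ _ _).
by rewrite -addn1 PoszD opprD addrA addrAC.
Qed.

Lemma psign_shift k j x ys :
  psign (k + j) x ys = psign k x ys * koz j ^+ size ys.
Proof.
elim: ys k x => [|y ys IH] k x /=; first by rewrite mulr1.
have -> : k + j - 1 = (k - 1) + j by rewrite addrAC.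
rewrite IH.
have -> : k + j - (ind x)%:Z = (k - (ind x)%:Z) + j by rewrite addrAC.
rewrite kozD exprS; ring.
Qed.

Lemma degs_cons (g : C * int) gs : degs (g :: gs) = g.2 + degs gs.
Proof. by rewrite /degs big_cons. Qed.

Lemma degs_cat (gs1 gs2 : seq (C * int)) : degs (gs1 ++ gs2) = degs gs1 + degs gs2.
Proof. by rewrite /degs big_cat. Qed.

Lemma degs_pgs x ys :
  degs (pgs x ys) = (ind x)%:Z - (ind (last x ys))%:Z - (size ys)%:Z.
Proof.
elim: ys x => [|y ys IH] x /=; first by rewrite /degs big_nil subrr subr0.
rewrite degs_cons IH /=.
rewrite -addn1 PoszD; lia.
Qed.

Lemma els_cat (gs1 gs2 : seq (C * int)) : els (gs1 ++ gs2) = els gs1 ++ els gs2.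
Proof. by rewrite /els map_cat. Qed.

Lemma size_els (gs : seq (C * int)) : size (els gs) = size gs.
Proof. by rewrite /els size_map. Qed.

End Paths.
Section Twisted.
Variable C : nzRingType.
Variable Crit : finType.
Variable ind : Crit -> nat.
Variable m : Crit -> Crit -> C.

Local Notation mtl := (@mtilde_lin C Crit ind m _).
Local Notation pgs := (@pgs C Crit ind m).
Local Notation psign := (@psign Crit ind).

Definition kw V (w : word C Crit V) := wdeg w + degs (wgs w) + (ind (wx w))%:Z.
Definition sc V (c : int) (cw : int * word C Crit V) := (c * cw.1, cw.2).

Lemma mtl_cat V (l1 l2 : seq (int * word C Crit V)) : mtl (l1 ++ l2) = mtl l1 ++ mtl l2.
Proof. by rewrite /mtilde_lin map_cat flatten_cat. Qed.

Lemma iter_cat V n (l1 l2 : seq (int * word C Crit V)) :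
  iter n mtl (l1 ++ l2) = iter n mtl l1 ++ iter n mtl l2.
Proof. by elim: n => [|n IH] //=; rewrite IH mtl_cat. Qed.

Lemma mtl_sc V c (l : seq (int * word C Crit V)) : mtl (map (sc c) l) = map (sc c) (mtl l).
Proof.
rewrite /mtilde_lin map_flatten -!map_comp; congr flatten; apply: eq_map => cw /=.
by rewrite -map_comp; apply: eq_map => cw' /=; rewrite /sc /= mulrA.
Qed.

Lemma iter_sc V n c (l : seq (int * word C Crit V)) :
  iter n mtl (map (sc c) l) = map (sc c) (iter n mtl l).
Proof. by elim: n => [|n IH] //=; rewrite IH mtl_sc. Qed.

Lemma af1_cat (V W : zmodType) (f : V -> seq C -> W) (l1 l2 : seq (int * word C Crit V)) :
  apply_f1 f (l1 ++ l2) = apply_f1 f l1 + apply_f1 f l2.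
Proof. by rewrite /apply_f1 big_cat. Qed.

Lemma af1_sc (V W : zmodType) (f : V -> seq C -> W) c (l : seq (int * word C Crit V)) :
  apply_f1 f (map (sc c) l) = apply_f1 f l *~ c.
Proof.
rewrite /apply_f1 big_map mulrz_suml; apply: eq_bigr => cw _.
apply/ffunP => z; rewrite ffunMzE !ffunE /sc /=.
by case: ifP => _; rewrite ?mul0rz // mulrzA_C.
Qed.

Lemma af1_iter (V W : zmodType) (f : V -> seq C -> W) n (l : seq (int * word C Crit V)) :
  apply_f1 f (iter n mtl l) = \sum_(cw <- l) apply_f1 f (iter n mtl [:: cw]).
Proof.
have i0 : iter n mtl ([::] : seq (int * word C Crit V)) = [::].
  by elim: n => [|n IHn] //; rewrite iterS IHn.
elim: l => [|cw l IH]; first by rewrite big_nil i0 /apply_f1 big_nil.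
by rewrite big_cons -IH -af1_cat -iter_cat.
Qed.

Definition pterm (V W : zmodType) (f : V -> seq C -> W) (w : word C Crit V) (ys : seq Crit)
  : {ffun Crit -> W} :=
  [ffun z => if z == last (wx w) ys
             then f (wa w) (els (wgs w ++ pgs (wx w) ys)) *~ psign (kw w) (wx w) ys
             else 0].

Lemma G_psum (V W : zmodType) (f : V -> seq C -> W) n w :
  apply_f1 f (iter n mtl [:: (1, w)]) = psum n (pterm f w).
Proof.
elim: n w => [|n IH] w.
  rewrite /apply_f1 big_seq1 /pterm /=; apply/ffunP => z; rewrite !ffunE /=.
  by rewrite cats0.
rewrite iterSr.
set sg := koz (- (wdeg w + degs (wgs w))).
set W' := fun y => Word (wa w) (wdeg w)
   (rcons (wgs w) (m (wx w) y, (ind (wx w))%:Z - (ind y)%:Z - 1)) y.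
have e : mtl [:: (1, w)] = [seq sc sg (1, W' y) | y <- enum Crit].
  by rewrite /mtilde_lin /= cats0 /mtilde -map_comp; apply: eq_map => y; rewrite /sc /= mul1r mulr1.
rewrite e af1_iter big_map big_enum /=.
apply: eq_bigr => y _.
have -> : [:: sc sg (1, W' y)] = map (sc sg) [:: (1, W' y)] by [].
rewrite iter_sc af1_sc IH -psum_mulz; apply: psum_ext => ys _.
apply/ffunP => z; rewrite ffunMzE !ffunE /=.
case: ifP => _; last by rewrite mul0rz.
rewrite cat_rcons mulrzA_C; congr (_ *~ _).
have -> : kw (W' y) = kw w - 1.
  rewrite /W' /kw /= /degs -cats1 big_cat big_seq1 /=; ring.
by rewrite /sg kozN /kw addrK mulrC.
Qed.

End Twisted.
Section Compose.
Variable C : nzRingType.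
Variable Crit : finType.
Variable ind : Crit -> nat.
Variable m : Crit -> Crit -> C.

Local Notation pgs := (@pgs C Crit ind m).
Local Notation psign := (@psign Crit ind).
Local Notation L := (#|Crit|.+1).

Definition E (V W : zmodType) (f : V -> seq C -> W) k (a : V) x (ys : seq Crit)
  : {ffun Crit -> W} :=
  [ffun z => if z == last x ys then f a (els (pgs x ys)) *~ psign k x ys else 0].

Lemma tw_psum (V W : zmodType) (f : V -> seq C -> W) k c :
  twisted_op ind m f k c = \sum_x \sum_(n < L) psum n (E f k (c x) x).
Proof.
rewrite /twisted_op; apply: eq_bigr => x _; apply: eq_bigr => n _.
rewrite G_psum; apply: psum_ext => ys _; apply/ffunP => z; rewrite !ffunE /=.
have hk : kw ind (Word (c x) (k - (ind x)%:Z) ([::] : seq (C * int)) x) = k.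
  by rewrite /kw /= /degs big_nil addr0 subrK.
by rewrite hk.
Qed.

Lemma psum_exchange (V : zmodType) n1 n2 (H : seq Crit -> seq Crit -> V) :
  psum n2 (fun ys2 => psum n1 (fun ys1 => H ys1 ys2))
  = psum n1 (fun ys1 => psum n2 (fun ys2 => H ys1 ys2)).
Proof.
elim: n1 H => [|n1 IH] H //=.
rewrite psum_sum; apply: eq_bigr => y _; exact: IH.
Qed.

Lemma psum_sum2 (V : zmodType) n1 n2 I (r : seq I) (P : pred I)
    (F : I -> seq Crit -> seq Crit -> V) :
  psum n1 (fun ys1 => psum n2 (fun ys2 => \sum_(i <- r | P i) F i ys1 ys2))
  = \sum_(i <- r | P i) psum n1 (fun ys1 => psum n2 (F i ys1)).
Proof.
rewrite -psum_sum; apply: psum_ext => ys1 _; exact: psum_sum.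
Qed.

Lemma TT (U V W : zmodType) (g : U -> seq C -> V) (F : V -> seq C -> W) k k' c z :
  (forall a b gs, F (a + b) gs = F a gs + F b gs) ->
  twisted_op ind m F k' (twisted_op ind m g k c) z =
  \sum_x \sum_(n1 < L) psum n1 (fun ys1 => \sum_(n2 < L) psum n2 (fun ys2 =>
    if z == last x (ys1 ++ ys2)
    then F (g (c x) (els (pgs x ys1))) (els (pgs (last x ys1) ys2))
           *~ (psign k x ys1 * psign k' (last x ys1) ys2)
    else 0)).
Proof.
move=> FD.
set T := twisted_op ind m g k c.
pose H x y ys1 ys2 := if (z == last y ys2) && (y == last x ys1)
    then F (g (c x) (els (pgs x ys1))) (els (pgs y ys2))
           *~ (psign k x ys1 * psign k' y ys2)
    else 0.
transitivity (\sum_y \sum_(n2 < L) psum n2 (fun ys2 =>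
   \sum_x \sum_(n1 < L) psum n1 (fun ys1 => H x y ys1 ys2))).
  rewrite tw_psum sum_ffunE; apply: eq_bigr => y _; rewrite sum_ffunE.
  apply: eq_bigr => n2 _; rewrite psum_ffun; apply: psum_ext => ys2 _.
  rewrite ffunE /H; case: (z == last y ys2) => /=; last first.
    by rewrite big1 // => x _; rewrite big1 // => n1 _; rewrite psum0.
  rewrite /T tw_psum sum_ffunE (af_sum (fun a b => FD a b _)) mulrz_suml.
  apply: eq_bigr => x _; rewrite sum_ffunE (af_sum (fun a b => FD a b _)) mulrz_suml.
  apply: eq_bigr => n1 _; rewrite psum_ffun (psum_morph _ _ (fun a b => FD a b _)).
  rewrite -psum_mulz; apply: psum_ext => ys1 _; rewrite ffunE.
  rewrite (af_if (fun a b => FD a b _)).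
  case: (y == last x ys1); last by rewrite mul0rz.
  by rewrite (afMz (fun a b => FD a b _)) mulrzA_C mulrC.
transitivity (\sum_x \sum_(n1 < L) psum n1 (fun ys1 => \sum_(n2 < L) psum n2 (fun ys2 =>
   \sum_y H x y ys1 ys2))).
  under eq_bigr do under eq_bigr do rewrite psum_sum.
  under eq_bigr do under eq_bigr do under eq_bigr do rewrite psum_sum.
  under eq_bigr do under eq_bigr do under eq_bigr do under eq_bigr do rewrite psum_exchange.
  rewrite exchange_big /=.
  under [RHS]eq_bigr do under eq_bigr do rewrite psum_sum.
  under [RHS]eq_bigr do under eq_bigr do under eq_bigr do rewrite psum_sum2.
  rewrite [LHS]exchange_big /=.
  under [LHS]eq_bigr do rewrite exchange_big /=.
  rewrite [LHS]exchange_big /=.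
  under [LHS]eq_bigr do under eq_bigr do rewrite exchange_big /=.
  under [LHS]eq_bigr do rewrite exchange_big /=.
  under [LHS]eq_bigr do under eq_bigr do rewrite exchange_big /=.
  done.
apply: eq_bigr => x _; apply: eq_bigr => n1 _; apply: psum_ext => ys1 _.
apply: eq_bigr => n2 _; apply: psum_ext => ys2 _.
rewrite (bigD1 (last x ys1)) //= big1 ?addr0; first by rewrite /H eqxx andbT last_cat.
by move=> y /negbTE hy; rewrite /H hy andbF.
Qed.
End Compose.
Lemma tri_nat (V : zmodType) (Q : nat -> nat -> V) M :
  \sum_(0 <= n1 < M) \sum_(0 <= n2 < M - n1) Q n1 (n1 + n2)%N
  = \sum_(0 <= N < M) \sum_(0 <= i < N.+1) Q i N.
Proof.
elim: M => [|M IH]; first by rewrite !big_geq.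
rewrite big_nat_recr //= [RHS]big_nat_recr //= -IH subSnn big_nat1 addn0.
rewrite [in RHS]big_nat_recr //= addrA.
congr (_ + _); rewrite -big_split /=; apply: eq_big_nat => n1 /andP [_ h].
rewrite subSn ?(ltnW h) // big_nat_recr //= subnKC // ltnW //.
Qed.

Section Tri.
Variable Crit : finType.
Local Notation L := (#|Crit|.+1).

Lemma TRI (V : zmodType) (G : seq Crit -> seq Crit -> V) :
  (forall ys1 ys2 : seq Crit, (#|Crit| <= size ys1 + size ys2)%N -> G ys1 ys2 = 0) ->
  \sum_(n1 < L) psum n1 (fun ys1 => \sum_(n2 < L) psum n2 (fun ys2 => G ys1 ys2)) =
  \sum_(N < L) psum N (fun ys => \sum_(0 <= i < N.+1) G (take i ys) (drop i ys)).
Proof.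
move=> G0.
pose Q n1 N := psum N (fun ys => G (take n1 ys) (drop n1 ys)).
have Q0 n1 N : (#|Crit| <= N)%N -> Q n1 N = 0.
  move=> hN; apply: psum_eq0 => ys hs; apply: G0.
  by rewrite size_take size_drop; case: ltnP => h; lia.
transitivity (\sum_(0 <= n1 < L) \sum_(0 <= n2 < L - n1) Q n1 (n1 + n2)%N).
  rewrite big_mkord; apply: eq_bigr => n1 _.
  rewrite psum_sum -(big_mkord xpredT (fun n2 => psum n1 (fun ys => psum n2 (G ys)))).
  rewrite (big_cat_nat (n := L - n1)) //= ?leq_subr //.
  have -> : \sum_(L - n1 <= n2 < L) psum n1 (fun ys => psum n2 (G ys)) = 0.
    rewrite big_nat_cond big1 // => n2 /andP [/andP [h1 h2] _].
    apply: psum_eq0 => ys hs; apply: psum_eq0 => ys2 hs2; apply: G0; lia.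
  rewrite addr0.
  apply: eq_big_nat => n2 _.
  rewrite /Q psum_cat; apply: psum_ext => ys1 h1; apply: psum_ext => ys2 h2.
  by rewrite take_size_cat // drop_size_cat.
rewrite tri_nat big_mkord; apply: eq_bigr => N _; rewrite psum_sum.
by apply: eq_bigr.
Qed.
End Tri.
Section Zero.
Variable C : nzRingType.
Variable Cd : int -> {pred C}.
Variable d : C -> C.
Variable Crit : finType.
Variable ind : Crit -> nat.
Variable m : Crit -> Crit -> C.

Local Notation pgs := (@pgs C Crit ind m).

Lemma ml_zero (V W : zmodType) (f : V -> seq C -> W) a l :
  multilinear f -> 0 \in l -> f a l = 0.
Proof.
move=> [_ fS] /splitPr [pre post].
exact: (af0 (f := fun g => f a (pre ++ g :: post)) (fS a pre post)).
Qed.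

Lemma ml_slot_sum (V W : zmodType) (f : V -> seq C -> W) a pre post I (r : seq I)
    (P : pred I) (G : I -> C) :
  multilinear f ->
  f a (pre ++ (\sum_(i <- r | P i) G i) :: post) = \sum_(i <- r | P i) f a (pre ++ G i :: post).
Proof.
move=> [_ fS]; exact: (af_sum (f := fun g => f a (pre ++ g :: post)) (fS a pre post)).
Qed.

Lemma ml_slot_mulz (V W : zmodType) (f : V -> seq C -> W) a pre post g z :
  multilinear f -> f a (pre ++ (g *~ z) :: post) = f a (pre ++ g :: post) *~ z.
Proof.
move=> [_ fS]; exact: (afMz (f := fun g => f a (pre ++ g :: post)) (fS a pre post)).
Qed.

Lemma path_dec x ys :
  (forall x y, m x y \in Cd ((ind x)%:Z - (ind y)%:Z - 1)) ->
  (forall q g, q < 0 -> g \in Cd q -> g = 0) ->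
  0 \notin els (pgs x ys) -> path (fun a b => ind b < ind a)%N x ys.
Proof.
move=> mD neg; elim: ys x => [|y ys IH] x //=.
rewrite /els /= inE negb_or => /andP [h1 h2]; rewrite IH // andbT.
rewrite ltnNge; apply/negP => hle; move/eqP: h1; apply.
symmetry; apply: (neg _ _ _ (mD x y)); lia.
Qed.

Lemma long_zero x ys :
  (forall x y, m x y \in Cd ((ind x)%:Z - (ind y)%:Z - 1)) ->
  (forall q g, q < 0 -> g \in Cd q -> g = 0) ->
  (#|Crit| <= size ys)%N -> 0 \in els (pgs x ys).
Proof.
move=> mD neg hs; apply/negPn/negP => h0.
have hp := path_dec mD neg h0.
have su : sorted (fun a b => ind b < ind a)%N (x :: ys) by [].
have hu : uniq (map ind (x :: ys)).
  apply: (@sorted_uniq _ (fun a b => b < a)%N).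
  - by move=> a b c h1 h2; apply: ltn_trans h2 h1.
  - by move=> a; rewrite ltnn.
  by rewrite sorted_map.
have := card_uniqP (map_uniq hu) => /eqP; rewrite eqn_leq => /andP [_ h].
have h2 : (#|x :: ys| <= #|Crit|)%N := max_card _.
move: h hs h2; rewrite /=; lia.
Qed.

End Zero.
Section MuTerms.
Variable C : nzRingType.
Variable d : C -> C.
Variables (V W : zmodType) (f : V -> seq C -> W).
Hypothesis fML : multilinear f.
Hypothesis dD : forall g h, d (g + h) = d g + d h.

Definition term p (a : V) (gs : seq (C * int)) r s :=
  f a (els (take r.-1 gs) ++ mu d (els (take s (drop r.-1 gs))) :: els (drop (r.-1 + s) gs))
    *~ (koz (r%:Z + (s * ((size gs).+1 - r - s))%:Z) * koz ((s%:Z - 2) * (p + degs (take r.-1 gs)))).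

Lemma mu_terms_E p a gs :
  mu_terms d f p a gs = \sum_(1 <= r < (size gs).+1) \sum_(1 <= s < ((size gs).+1 - r).+1) term p a gs r s.
Proof. by []. Qed.

Lemma zero_mu_list (gs : seq (C * int)) r s :
  0 \in els gs ->
  0 \in els (take r.-1 gs) ++ mu d (els (take s (drop r.-1 gs))) :: els (drop (r.-1 + s) gs).
Proof.
have d0 : d 0 = 0 := af0 dD.
rewrite -{1}(cat_take_drop r.-1 gs) -{1}(cat_take_drop s (drop r.-1 gs)).
have e : drop (r.-1 + s) gs = drop s (drop r.-1 gs) by rewrite drop_drop addnC.
rewrite e !els_cat !mem_cat => /or3P [h|h|h].
- by rewrite h.
- apply/orP; right; rewrite in_cons; apply/orP; left; apply/eqP.
  move: h; case: (els _) => [|g [|h [|? ?]]] //=.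
  + by rewrite inE => /eqP <-.
  + by rewrite !inE => /orP [] /eqP <-; rewrite ?mul0r ?mulr0.
- by rewrite in_cons h !orbT.
Qed.

Lemma mu_big (l : seq C) : (3 <= size l)%N -> mu d l = 0.
Proof. by case: l => [|? [|? [|? ?]]]. Qed.

Lemma MT_split p a gs :
  mu_terms d f p a gs = \sum_(1 <= r < (size gs).+1) term p a gs r 1
                      + \sum_(1 <= r < size gs) term p a gs r 2.
Proof.
rewrite mu_terms_E.
set n := size gs.
transitivity (\sum_(1 <= r < n.+1) (term p a gs r 1 + (if (r < n)%N then term p a gs r 2 else 0))).
  apply: eq_big_nat => r /andP [h1 h2].
  rewrite (@big_nat_recl _ _ _ (n.+1 - r) 1 (term p a gs r)); last by lia.
  congr (_ + _).
  case: ltnP => hr; last first.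
    by rewrite big_geq //; lia.
  rewrite subSn; last by lia.
  rewrite big_nat_recl; last by lia.
  rewrite big_nat_cond big1 ?addr0 // => s /andP [/andP [hs1 hs2] _].
  rewrite /term ml_zero ?mul0rz //.
  rewrite mu_big ?mem_cat ?in_cons ?eqxx ?orbT //.
  rewrite size_els size_take size_drop; case: ifP => _; lia.
rewrite big_split /=; congr (_ + _).
case: n => [|n]; first by rewrite !big_geq.
rewrite big_nat_recr //= ltnn addr0.
by apply: eq_big_nat => r /andP [_ ->].
Qed.

End MuTerms.
Lemma koz_exp (j : int) n : koz j ^+ n = koz (j * n%:Z).
Proof.
elim: n => [|n IH]; first by rewrite expr0 mulr0.
by rewrite exprS IH -kozD -addn1 PoszD mulrDr mulr1 addrC.
Qed.

Lemma if_sum (V : zmodType) (b : bool) I (r : seq I) (P : pred I) (F : I -> V) c :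
  (if b then (\sum_(i <- r | P i) F i) *~ c else 0)
  = \sum_(i <- r | P i) (if b then F i *~ c else 0).
Proof. by case: b; rewrite ?mulrz_suml // big1. Qed.

Section Cancel.
Variable C : nzRingType.
Variable Cd : int -> {pred C}.
Variable d : C -> C.
Variable Crit : finType.
Variable ind : Crit -> nat.
Variable m : Crit -> Crit -> C.
Variables (V W : zmodType) (f : V -> seq C -> W).
Hypothesis fML : multilinear f.
Hypothesis dD : forall g h, d (g + h) = d g + d h.
Hypothesis dm : forall x y, d (m x y) = \sum_(z : Crit) (m x z * m z y) *~ koz ((ind x)%:Z - (ind z)%:Z).
Hypothesis mD : forall x y, m x y \in Cd ((ind x)%:Z - (ind y)%:Z - 1).
Hypothesis neg : forall q g, q < 0 -> g \in Cd q -> g = 0.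

Local Notation pgs := (@pgs C Crit ind m).
Local Notation psign := (@psign Crit ind).
Local Notation term := (@term C d V W f).

Lemma term_at p a (pre mid post : seq (C * int)) r :
  size pre = r.-1 -> (0 < r)%N ->
  term p a (pre ++ mid ++ post) r (size mid)
  = f a (els pre ++ mu d (els mid) :: els post)
     *~ (koz (r%:Z + (size mid * ((size pre + size mid + size post).+1 - r - size mid))%:Z)
         * koz (((size mid)%:Z - 2) * (p + degs pre))).
Proof.
move=> hs hr; rewrite /term take_size_cat // (addnC r.-1) -drop_drop drop_size_cat //.
by rewrite take_size_cat // drop_size_cat // !size_cat addnA.
Qed.

Lemma cancel_pt k x a z r (pre post : seq Crit) v N :
  size pre = r -> size post = (N - r.+1)%N -> (r.+1 <= N)%N ->
  (if z == last x (pre ++ v :: post)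
   then term (k - (ind x)%:Z) a (pgs x (pre ++ v :: post)) r.+1 1 *~ psign k x (pre ++ v :: post)
   else 0)
  = - \sum_(w : Crit)
     (if z == last x (pre ++ w :: v :: post)
      then term (k - (ind x)%:Z) a (pgs x (pre ++ w :: v :: post)) r.+1 2
             *~ psign k x (pre ++ w :: v :: post)
      else 0).
Proof.
move=> hpre hpost hN.
set u := last x pre.
have l1 w : last x (pre ++ w :: v :: post) = last x (pre ++ v :: post) by rewrite !last_cat.
under eq_bigr do rewrite l1.
case: (z == _); last by rewrite big1 ?oppr0.
rewrite !pgs_cat /=.
have e1 : pgs x pre ++ (m u v, (ind u)%:Z - (ind v)%:Z - 1) :: pgs v post
  = pgs x pre ++ [:: (m u v, (ind u)%:Z - (ind v)%:Z - 1)] ++ pgs v post by [].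
rewrite e1 (@term_at _ _ _ [:: _]) ?size_pgs //=.
rewrite dm ml_slot_sum // mulrz_suml mulrz_suml -sumrN.
apply: eq_bigr => w _.
have e2 : pgs x pre ++ (m u w, (ind u)%:Z - (ind w)%:Z - 1) :: (m w v, (ind w)%:Z - (ind v)%:Z - 1) :: pgs v post
  = pgs x pre ++ [:: (m u w, (ind u)%:Z - (ind w)%:Z - 1); (m w v, (ind w)%:Z - (ind v)%:Z - 1)] ++ pgs v post by [].
rewrite pgs_cat /= e2 (@term_at _ _ _ [:: _; _]) ?size_pgs //=.
rewrite ml_slot_mulz // -!mulrzA -mulrNz; congr (_ *~ _).
rewrite !psign_cat /= degs_pgs !hpre.
rewrite (psign_shift ind (k - r%:Z - 1) (-1)) koz_exp.
move: (psign k x pre) (psign (k - r%:Z - 1) v post) => P0 Q.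
set iu := (ind (last x pre))%:Z.
set A1 := koz ((ind u)%:Z - (ind w)%:Z).
set A2 := koz (r.+1%:Z + (1 * ((r + 1 + size post).+1 - r.+1 - 1))%N%:Z).
set A3 := koz ((1%:Z - 2) * (k - (ind x)%:Z + ((ind x)%:Z - iu - r%:Z))).
set B1 := koz (r.+1%:Z + (2 * ((r + 2 + size post).+1 - r.+1 - 2))%N%:Z).
set B2 := koz ((2%:Z - 2) * (k - (ind x)%:Z + ((ind x)%:Z - iu - r%:Z))).
set B3 := koz (k - r%:Z - 1 - (ind w)%:Z).
set B4 := koz (-1 * (size post)%:Z).
set K0 := koz (k - r%:Z - iu).
have key : A1 * (A2 * A3) = - (B1 * B2 * B3 * B4).
  rewrite /A1 /A2 /A3 /B1 /B2 /B3 /B4 -!kozD -kozS.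
  rewrite -(koz_even _ (k - iu - r%:Z)); congr koz.
  rewrite /iu /u; lia.
transitivity ((A1 * (A2 * A3)) * (P0 * K0 * Q)); first by ring.
by rewrite key; ring.
Qed.
Lemma MC k x a z :
  \sum_(N < #|Crit|.+1) psum N (fun ys => if z == last x ys
     then mu_terms d f (k - (ind x)%:Z) a (pgs x ys) *~ psign k x ys else 0) = 0.
Proof.
set p := k - (ind x)%:Z.
pose F1 r ys := if z == last x ys then term p a (pgs x ys) r 1 *~ psign k x ys else 0.
pose F2 r ys := if z == last x ys then term p a (pgs x ys) r 2 *~ psign k x ys else 0.
pose B N := psum N (fun ys => \sum_(1 <= r < N) F2 r ys).
have split N : psum N (fun ys => if z == last x ys
     then mu_terms d f p a (pgs x ys) *~ psign k x ys else 0)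
   = psum N (fun ys => \sum_(1 <= r < N.+1) F1 r ys) + B N.
  rewrite -psum_add; apply: psum_ext => ys hs.
  rewrite /F1 /F2 -!if_sum (@MT_split _ d _ _ f fML) size_pgs hs.
  by case: (z == _); rewrite ?mulrzDl ?addr0.
have key N : psum N (fun ys => \sum_(1 <= r < N.+1) F1 r ys) = - B N.+1.
  rewrite /B !psum_sum -sumrN; apply: eq_big_nat => r /andP [h1 h2].
  case: r h1 h2 => [|r] // _ h2.
  have eN : N = (r + (N - r.+1).+1)%N by lia.
  have eN1 : N.+1 = (r + (N - r.+1).+2)%N by lia.
  rewrite {1}eN eN1 !psum_cat (psum_morph (f := @GRing.opp W)); last exact: opprD.
  apply: psum_ext => pre hpre /=.
  rewrite exchange_big /= -sumrN; apply: eq_bigr => v _.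
  rewrite -psum_sum (psum_morph (f := @GRing.opp W)); last exact: opprD.
  apply: psum_ext => post hpost.
  by rewrite /F1 /F2 (@cancel_pt k x a z r pre post v N hpre hpost h2).
have B0 : B 0%N = 0 by rewrite /B /= big_geq.
have BL : B #|Crit|.+1 = 0.
  apply: psum_eq0 => ys hs; rewrite big1 // => r _; rewrite /F2.
  case: ifP => // _; rewrite /term ml_zero ?mul0rz //.
  apply: (zero_mu_list dD). have hh : (#|Crit| <= size ys)%N by lia.
  exact: (@long_zero _ _ _ _ _ x ys mD neg hh).
under eq_bigr do rewrite split key.
rewrite -(big_mkord xpredT (fun N => - B N.+1 + B N)).
have := telescope_sumr B (leq0n #|Crit|.+1).
rewrite BL B0 subr0 => h.
by rewrite -[LHS]opprK -sumrN; under eq_bigr do rewrite opprD opprK; rewrite h oppr0.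
Qed.

End Cancel.
Section Graded.
Variables (V : zmodType) (Vd : int -> {pred V}).
Hypothesis gV : graded_sub Vd.
Lemma gs0 q : 0 \in Vd q. Proof. by case: (gV q). Qed.
Lemma gsB q u v : u \in Vd q -> v \in Vd q -> u - v \in Vd q.
Proof. by case: (gV q) => _ h; apply: h. Qed.
Lemma gsN q u : u \in Vd q -> - u \in Vd q.
Proof. by move=> h; rewrite -sub0r gsB ?gs0. Qed.
Lemma gsD q u v : u \in Vd q -> v \in Vd q -> u + v \in Vd q.
Proof. by move=> hu hv; rewrite -[v]opprK gsB ?gsN. Qed.
Lemma gsMn q u n : u \in Vd q -> u *+ n \in Vd q.
Proof. move=> hu; elim: n => [|n IH]; rewrite ?mulr0n ?gs0 // mulrS gsD //. Qed.
Lemma gsMz q u z : u \in Vd q -> u *~ z \in Vd q.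
Proof. by move=> hu; case: z => n; rewrite ?NegzE ?mulrNz ?gsN ?gsMn. Qed.
Lemma gs_sum q I (r : seq I) (P : pred I) (F : I -> V) :
  (forall i, P i -> F i \in Vd q) -> \sum_(i <- r | P i) F i \in Vd q.
Proof.
move=> h; elim/big_rec: _ => [|i x Pi hx]; first exact: gs0.
by apply: gsD => //; apply: h.
Qed.
Lemma gs_psum (Crit : finType) q n (F : seq Crit -> V) :
  (forall ys, F ys \in Vd q) -> psum n F \in Vd q.
Proof.
elim: n F => [|n IH] F h //=; apply: gs_sum => y _; exact: IH.
Qed.
End Graded.
Section Final.
Variable C : nzRingType.
Variable Cd : int -> {pred C}.
Variable d : C -> C.
Variable Crit : finType.
Variable ind : Crit -> nat.
Variable m : Crit -> Crit -> C.
Hypothesis mD : forall x y, m x y \in Cd ((ind x)%:Z - (ind y)%:Z - 1).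
Hypothesis neg : forall q g, q < 0 -> g \in Cd q -> g = 0.

Local Notation pgs := (@pgs C Crit ind m).
Local Notation psign := (@psign Crit ind).
Local Notation L := (#|Crit|.+1).

Lemma homs_pgs x ys : homs Cd (pgs x ys).
Proof. by elim: ys x => [|y ys IH] x //=; rewrite mD IH. Qed.

Lemma pgs_take x ys i : (i <= size ys)%N ->
  els (pgs x (take i ys)) = take i (els (pgs x ys)) /\
  els (pgs (last x (take i ys)) (drop i ys)) = drop i (els (pgs x ys)).
Proof.
move=> hi; have E := pgs_cat ind m x (take i ys) (drop i ys); rewrite cat_take_drop in E.
rewrite E els_cat.
have hs : size (els (pgs x (take i ys))) = i by rewrite size_els size_pgs size_takel.
by rewrite take_size_cat // drop_size_cat.
Qed.

Lemma TT2 (U V W : zmodType) (g : U -> seq C -> V) (F : V -> seq C -> W) k k' c z :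
  multilinear g -> multilinear F ->
  twisted_op ind m F k' (twisted_op ind m g k c) z =
  \sum_x \sum_(N < L) psum N (fun ys => \sum_(0 <= i < N.+1)
   (if z == last x ys
    then F (g (c x) (take i (els (pgs x ys)))) (drop i (els (pgs x ys)))
         *~ (psign k x (take i ys) * psign k' (last x (take i ys)) (drop i ys))
    else 0)).
Proof.
move=> gML FML.
rewrite TT; last by case: FML.
apply: eq_bigr => x _.
rewrite (TRI (G := fun ys1 ys2 => if z == last x (ys1 ++ ys2)
    then F (g (c x) (els (pgs x ys1))) (els (pgs (last x ys1) ys2))
           *~ (psign k x ys1 * psign k' (last x ys1) ys2)
    else 0)).
  apply: eq_bigr => N _; apply: psum_ext => ys hs; apply: eq_big_nat => i /andP [_ hi].
  have hi' : (i <= size ys)%N by rewrite hs -ltnS.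
  have [e1 e2] := pgs_take x hi'.
  by rewrite cat_take_drop e1 e2.
move=> ys1 ys2 hs; case: ifP => // _.
have : 0 \in els (pgs x (ys1 ++ ys2)).
  by apply: (@long_zero _ _ _ _ _ x _ mD neg); rewrite size_cat.
rewrite pgs_cat els_cat mem_cat => /orP [h|h].
  rewrite (ml_zero _ gML h); case: FML => FD _.
  by rewrite (af0 (fun a b => FD a b _)) mul0rz.
by rewrite (ml_zero _ FML h) mul0rz.
Qed.

Lemma SG k j x ys i : (i <= size ys)%N ->
  psign k x (take i ys) * psign (k + j) (last x (take i ys)) (drop i ys)
  = psign k x ys * koz (j + i%:Z) ^+ (size ys - i).
Proof.
move=> hi; have E := psign_cat ind k x (take i ys) (drop i ys).
rewrite cat_take_drop size_takel // in E; rewrite E.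
have -> : k + j = (k - i%:Z) + (j + i%:Z) by ring.
by rewrite psign_shift size_drop mulrA.
Qed.

End Final.
Theorem propositionB (C : nzRingType) (Cd : int -> {pred C}) (d : C -> C)
    (Crit : finType) (ind : Crit -> nat) (m : Crit -> Crit -> C)
    (A : zmodType) (Ad : int -> {pred A}) (nuA : A -> seq C -> A)
    (B : zmodType) (Bd : int -> {pred B}) (nuB : B -> seq C -> B)
    (phi : A -> seq C -> B) :
  is_DGA Cd d ->
  twisting_cocycle Cd d ind m ->
  Ainf_module Cd d Ad nuA ->
  Ainf_module Cd d Bd nuB ->
  Ainf_morphism Cd d Ad nuA Bd nuB phi ->
  forall (k : int) (c : {ffun Crit -> A}),
    (forall x, c x \in Ad (k - (ind x)%:Z)) ->
    (forall y, twisted_op ind m phi k c y \in Bd (k - (ind y)%:Z)) /\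
    twisted_op ind m nuB k (twisted_op ind m phi k c)
    = twisted_op ind m phi (k - 1) (twisted_op ind m nuA k c).
Proof.
move=> [gsC [negC _ _ dD _]] [mD dm] [gA mlA degA eqA] [gB mlB degB eqB]
  [mlP degP morE] k c hc.
split.
  move=> y; rewrite tw_psum sum_ffunE; apply: (gs_sum gB) => x _.
  rewrite sum_ffunE; apply: (gs_sum gB) => n _; rewrite psum_ffun.
  apply: (gs_psum gB) => ys; rewrite ffunE; case: eqP => [->|_]; last exact: gs0.
  apply: (gsMz gB).
  have := degP _ _ _ (hc x) (homs_pgs mD x ys).
  rewrite degs_pgs size_pgs.
  have -> : k - (ind x)%:Z + ((ind x)%:Z - (ind (last x ys))%:Z - (size ys)%:Z) + (size ys)%:Z
     = k - (ind (last x ys))%:Z by ring.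
  by [].
apply/ffunP => z.
rewrite (TT2 mD negC _ _ _ _ mlP mlB) (TT2 mD negC _ _ _ _ mlA mlP).
apply: eq_bigr => x _.
have MU := @MC C Cd d Crit ind m A B phi mlP dD dm mD negC k x (c x) z.
rewrite -[RHS]addr0 -[X in _ = _ + X]MU -big_split /=; apply: eq_bigr => N _.
rewrite -psum_add; apply: psum_ext => ys hs.
case: (z == last x ys); last by rewrite !big1 // addr0.
have mor := morE _ _ _ (hc x) (homs_pgs mD x ys).
rewrite /= !big_add1 /= size_pgs hs in mor.
set M := els (pgs ind m x ys) in mor *.
set sg := psign ind k x ys.
have SL j i : (i <= N)%N -> psign ind k x (take i ys) * psign ind (k + j) (last x (take i ys)) (drop i ys)
    = sg * koz (j + i%:Z) ^+ (N - i).
  by move=> hi; rewrite SG ?hs.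
transitivity ((\sum_(0 <= i < N.+1) nuB (phi (c x) (take i M)) (drop i M)
    *~ koz ((i.+2 * (N.+1 - i.+1))%N%:Z)) *~ sg).
  rewrite mulrz_suml; apply: eq_big_nat => i /andP [_ hi].
  have := SL 0 i hi; rewrite addr0 => ->.
  rewrite mulrzA_C; congr (_ *~ _); congr (_ * _).
  rewrite koz_exp -(koz_even _ (N - i)%:Z); congr koz; lia.
rewrite -mor mulrzDl; congr (_ + _).
rewrite mulrz_suml; apply: eq_big_nat => i /andP [_ hi].
have := SL (-1) i hi => ->.
rewrite mulrzA_C; congr (_ *~ _); congr (_ * _).
rewrite koz_exp -(koz_even _ (- (N - i)%:Z)); congr koz; nia.
Qed.
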